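(* Let $\Psi$ be the functor generated by a pattern $\{P\}\cup\{(Q_R,q_{R,1},\dots,q_{R,a(R)}):R\in\tau\}$ such that for every $R\in\tau$ and all $1\le i<j\le a(R)$ the images $q_{R,i}(P)$ and $q_{R,j}(P)$ are disjoint subsets of the universe of $Q_R$. If a $\sigma$-structure $A$ has finite duality, then the $\tau$-structure $\Psi A$ also has finite duality.
   Context: A vocabulary is a finite set of relation symbols $R$ each with an arity $a(R)$. A $\sigma$-structure $A$ consists of a nonempty finite universe and, for each $R\in\sigma$, an $a(R)$-ary relation $R(A)$; homomorphisms are relation-preserving maps between universes of structures with the same vocabulary. A set $\mathcal F$ of $\sigma$-structures is a complete set of obstructions for $A$ if for every $\sigma$-structure $B$: $B\to A$ iff no $F\in\mathcal F$ admits a homomorphism to $B$; $A$ has finite duality if it has a finite complete set of obstructions. Pattern functor: fix a $\sigma$-structure $P$ and for each $R\in\tau$ a $\sigma$-structure $Q_R$ with homomorphisms $q_{R,1},\dots,q_{R,a(R)}:P\to Q_R$. For a $\sigma$-structure $A$, $\Psi A$ is the $\tau$-structure whose universe is the set of all homomorphisms $f:P\to A$, and for $R\in\tau$ of arity $r$, $R(\Psi A)$ is the set of tuples $(f_1,\dots,f_r)$ for which there is a homomorphism $g:Q_R\to A$ with $g\circ q_{R,i}=f_i$ for all $i$. *)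

(* Defs.v *)
From HB Require Import structures.
From Stdlib Require Import List.
From mathcomp Require Import all_boot.
Set Implicit Arguments. Unset Strict Implicit. Unset Printing Implicit Defensive.

Record vocab := Vocab { sym :> finType; arity : sym -> nat }.

(* A sigma-structure: a finite universe and, for each symbol R, an
   (arity R)-ary relation on it.  Nonemptiness of the universe is NOT
   built in; it is expressed by the predicate [nonempty] below. *)
Record struct (V : vocab) := Struct {
  univ : finType;
  rel : forall R : V, pred ((arity R).-tuple univ) }.
Arguments univ {V}.
Arguments rel {V}.

Definition nonempty (V : vocab) (A : struct V) : bool := 0 < #|univ A|.

Definition is_hom (V : vocab) (A B : struct V) (f : univ A -> univ B) : bool :=
  [forall R : V, forall t : (arity R).-tuple (univ A),
     rel A R t ==> rel B R (map_tuple f t)].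
Arguments is_hom {V} A B f.

Definition hom_exists (V : vocab) (A B : struct V) : Prop :=
  exists f : univ A -> univ B, is_hom A B f.

(* Fs is a complete set of obstructions for A (structures have nonempty
   universes, so B and the members of Fs range over nonempty structures). *)
Definition complete_obstructions (V : vocab) (A : struct V) (Fs : seq (struct V)) : Prop :=
  (forall F, List.In F Fs -> nonempty F) /\
  forall B : struct V, nonempty B ->
    (hom_exists B A <-> ~ (exists F, List.In F Fs /\ hom_exists F B)).

Definition finite_duality (V : vocab) (A : struct V) : Prop :=
  exists Fs : seq (struct V), complete_obstructions A Fs.

Record pattern (sigma tau : vocab) := Pattern {
  pat_P : struct sigma;
  pat_Q : tau -> struct sigma;
  pat_q : forall (R : tau) (i : 'I_(arity R)), univ pat_P -> univ (pat_Q R);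
  pat_q_hom : forall (R : tau) (i : 'I_(arity R)), is_hom pat_P (pat_Q R) (pat_q i) }.
Arguments pat_P {sigma tau}.
Arguments pat_Q {sigma tau}.
Arguments pat_q {sigma tau} p {R}.

Section Psi.
Variables (sigma tau : vocab) (pat : pattern sigma tau) (A : struct sigma).

Definition psi_univ : finType :=
  {f : {ffun univ (pat_P pat) -> univ A} | is_hom (pat_P pat) A f}.

Definition psi_rel (R : tau) : pred ((arity R).-tuple psi_univ) :=
  fun t => [exists g : {ffun univ (pat_Q pat R) -> univ A},
             is_hom (pat_Q pat R) A g &&
             [forall i : 'I_(arity R), forall x : univ (pat_P pat),
                g (pat_q pat i x) == val (tnth t i) x]].

Definition Psi : struct tau := @Struct tau psi_univ psi_rel.
End Psi.

(* Main.v *)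
Require Import Defs.
From Stdlib Require Import List Classical.
From mathcomp Require Import all_boot.
Set Implicit Arguments. Unset Strict Implicit. Unset Printing Implicit Defensive.

Lemma map_tuple_comp (T U W : Type) n (f : T -> U) (g : U -> W) (t : n.-tuple T) :
  map_tuple (g \o f) t = map_tuple g (map_tuple f t).
Proof. by apply: val_inj; rewrite /= map_comp. Qed.

Lemma is_hom_comp V (X Y Z : struct V) f g :
  is_hom X Y f -> is_hom Y Z g -> is_hom X Z (g \o f).
Proof.
move=> /forallP Hf /forallP Hg; apply/forallP=> R; apply/forallP=> t; apply/implyP=> Ht.
rewrite map_tuple_comp.
by have /forallP/(_ t)/implyP/(_ Ht) := Hf R => H1; have /forallP/(_ _)/implyP/(_ H1) := Hg R.
Qed.

Lemma hom_trans V (X Y Z : struct V) : hom_exists X Y -> hom_exists Y Z -> hom_exists X Z.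
Proof. by move=> [f Hf] [g Hg]; exists (g \o f); apply: is_hom_comp. Qed.

Lemma hom_id V (X : struct V) : hom_exists X X.
Proof.
exists id; apply/forallP=> R; apply/forallP=> t; apply/implyP.
by have -> : map_tuple id t = t by apply: val_inj; rewrite /= map_id.
Qed.

Definition homb V (X Y : struct V) : bool :=
  [exists f : {ffun univ X -> univ Y}, is_hom X Y f].

Lemma hombP V (X Y : struct V) : reflect (hom_exists X Y) (homb X Y).
Proof.
apply: (iffP existsP) => [[f Hf]|[f Hf]]; first by exists f.
exists [ffun x => f x].
apply/forallP=> R; apply/forallP=> t; apply/implyP=> Ht.
have -> : map_tuple [ffun x => f x] t = map_tuple f t.
  by apply: val_inj; apply: eq_map => x; rewrite ffunE.
by move: Hf => /forallP/(_ R)/forallP/(_ t)/implyP; apply.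
Qed.

Definition tup_t (V : vocab) (k : nat) := {R : V & (arity R).-tuple 'I_k}.

Definition mkS V k (X : {set tup_t V k}) : struct V :=
  @Struct V 'I_k (fun R t => Tagged (fun R => (arity R).-tuple 'I_k) t \in X).

Definition Obs V (Y : struct V) (K : nat) : seq (struct V) :=
  List.flat_map (fun k => List.map (@mkS V k)
     (List.filter (fun X => ~~ homb (mkS X) Y) (enum {set tup_t V k}))) (iota 1 K).

Lemma In_memE (T : eqType) (x : T) s : List.In x s <-> x \in s.
Proof.
elim: s => [|y s IH] //=; rewrite in_cons; split.
- by case=> [->|/IH ->]; rewrite ?eqxx ?orbT.
- by case/orP=> [/eqP ->|/IH]; [left|right].
Qed.

Lemma Obs_nonempty V Y K G : List.In G (@Obs V Y K) -> nonempty G.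
Proof.
case/in_flat_map=> k [/In_memE]; rewrite mem_iota => /andP[k1 _].
case/in_map_iff=> X [<- _]; by rewrite /nonempty /= card_ord.
Qed.

Lemma Obs_complete V (Y : struct V) K (X : struct V) :
  nonempty X -> #|univ X| <= K -> ~ hom_exists X Y ->
  exists G, List.In G (Obs Y K) /\ hom_exists G X.
Proof.
move=> ne le nh.
pose k := #|univ X|.
pose Xs := [set p : tup_t V k | Defs.rel X (tag p) (map_tuple enum_val (tagged p))].
have GX : is_hom (mkS Xs) X enum_val.
  apply/forallP=> R; apply/forallP=> t; apply/implyP.
  by rewrite /= inE.
have XG : is_hom X (mkS Xs) enum_rank.
  apply/forallP=> R; apply/forallP=> t; apply/implyP=> Ht.
  rewrite /= inE /=.
  have -> : map_tuple enum_val (map_tuple enum_rank t) = t.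
    by apply: val_inj; rewrite /= -map_comp (eq_map (@enum_rankK _)) map_id.
  by [].
exists (mkS Xs); split; last by exists enum_val.
apply/in_flat_map; exists k; split.
  by apply/In_memE; rewrite mem_iota add1n ltnS le andbT.
apply/in_map_iff; exists Xs; split => //.
apply/filter_In; split; first by apply/In_memE; rewrite mem_enum.
apply/negP=> /hombP H; apply: nh; apply: hom_trans H; by exists enum_rank.
Qed.

Lemma Obs_nohom V (Y : struct V) K G : List.In G (Obs Y K) -> ~ hom_exists G Y.
Proof.
case/in_flat_map=> k [_]; case/in_map_iff=> X [<- /filter_In [_ HX]] H.
by move/negP: HX; apply; apply/hombP.
Qed.

Lemma leq_foldr_max (X : Type) (f : X -> nat) (s : seq X) x :
  List.In x s -> f x <= foldr (fun y m => maxn (f y) m) 0 s.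
Proof.
elim: s => [|y s IH] //= [->|/IH H]; first by rewrite leq_maxl.
by apply: leq_trans H (leq_maxr _ _).
Qed.
Section Constr.
Variables (sigma tau : vocab) (pat : pattern sigma tau) (A : struct sigma) (B : struct tau).

Local Notation P := (pat_P pat).
Local Notation Q := (pat_Q pat).
Local Notation q := (pat_q pat).

Definition Sig := {R : tau & 'I_(arity R)}.

Definition haswit (b : univ B) (Ri : Sig) : bool :=
  [exists t : (arity (tag Ri)).-tuple (univ B),
     Defs.rel B (tag Ri) t && (tnth t (tagged Ri) == b)].

Definition edge (b : univ B) : rel (univ P) := fun x y =>
  [exists Ri : Sig, haswit b Ri && (q (tagged Ri) x == q (tagged Ri) y)].

Lemma edge_sym b : connect_sym (edge b).
Proof.
apply: sym_connect_sym => x y; apply/existsP/existsP => [] [Ri /andP[H1 /eqP H2]];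
  by exists Ri; rewrite H1 H2 eqxx.
Qed.

Definition rt b x := root (edge b) x.

Definition TQ := {R : tau & ((arity R).-tuple (univ B) * univ (Q R))%type}.
Definition T := ((univ B * univ P) + TQ)%type.

Definition preim (R : tau) (y : univ (Q R)) :=
  [pick ix : 'I_(arity R) * univ P | q ix.1 ix.2 == y].

Definition norm (z : T) : T :=
  match z with
  | inl (b, x) => inl (b, rt b x)
  | inr p =>
     match p with existT R (t, y) =>
       match preim y with
       | Some (i, x) => inl (tnth t i, rt (tnth t i) x)
       | None => inr p
       end
     end
  end.

Lemma norm_idem z : norm (norm z) = norm z.
Proof.
case: z => [[b x]|[R [t y]]] /=; first by rewrite /rt (root_root (edge_sym b)).
case E: (preim y) => [[i x]|] /=; last by rewrite E.
by rewrite /rt (root_root (edge_sym _)).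
Qed.

Definition CU := {z : T | norm z == z}.
Definition nzC (z : T) : CU := exist _ (norm z) (introT eqP (norm_idem z)).

Definition Pc (S : sigma) :=
  ((univ B * (arity S).-tuple (univ P)) +
   {R : tau & ((arity R).-tuple (univ B) * (arity S).-tuple (univ (Q R)))%type})%type.

Definition good (S : sigma) (p : Pc S) (u : (arity S).-tuple CU) : bool :=
  match p with
  | inl (b, s) => Defs.rel P S s && (u == map_tuple (fun x => nzC (inl (b, x))) s)
  | inr (existT R (t, s)) => Defs.rel B R t && Defs.rel (Q R) S s &&
       (u == map_tuple (fun y => nzC (inr (existT _ R (t, y)))) s)
  end.

Definition C : struct sigma :=
  @Struct sigma CU (fun S u => [exists p : Pc S, good p u]).


Lemma C_to_psi
  (disj : forall (R : tau) (i j : 'I_(arity R)), (i < j)%N -> forall x y, q i x <> q j y) :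
  hom_exists C A -> hom_exists B (Psi pat A).
Proof.
move=> [k Hk].
pose hb b : {ffun univ P -> univ A} := [ffun x => k (nzC (inl (b, x)))].
have hbP b : is_hom P A (hb b).
  apply/forallP=> S; apply/forallP=> s; apply/implyP=> Hs.
  have HC : Defs.rel C S (map_tuple (fun x => nzC (inl (b,x))) s).
    by apply/existsP; exists (inl (b, s)); rewrite /= Hs eqxx.
  move: Hk => /forallP/(_ S)/forallP/(_ _)/implyP/(_ HC).
  have -> : map_tuple (hb b) s = map_tuple k (map_tuple (fun x => nzC (inl (b,x))) s).
    by apply: val_inj; rewrite /= -map_comp; apply: eq_map => x; rewrite ffunE.
  by [].
pose h b : psi_univ pat A := exist _ (hb b) (hbP b).
exists h.
apply/forallP=> R; apply/forallP=> t; apply/implyP=> Ht.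
apply/existsP; exists [ffun y => k (nzC (inr (existT _ R (t, y))))].
apply/andP; split.
  apply/forallP=> S; apply/forallP=> s; apply/implyP=> Hs.
  have HC : Defs.rel C S (map_tuple (fun y => nzC (inr (existT _ R (t, y)))) s).
    by apply/existsP; exists (inr (existT _ R (t, s))); rewrite /= Ht Hs eqxx.
  move: Hk => /forallP/(_ S)/forallP/(_ _)/implyP/(_ HC).
  have -> : map_tuple [ffun y => k (nzC (inr (existT _ R (t, y))))] s =
     map_tuple k (map_tuple (fun y => nzC (inr (existT _ R (t, y)))) s).
    by apply: val_inj; rewrite /= -map_comp; apply: eq_map => x; rewrite ffunE.
  by [].
apply/forallP=> i; apply/forallP=> x; rewrite ffunE tnth_map /= ffunE.
suff -> : nzC (inr (existT _ R (t, q i x))) = nzC (inl (tnth t i, x)) by [].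
apply: val_inj => /=; rewrite /preim.
case: pickP => [[i' x'] /= /eqP E|/(_ (i,x))]; last by rewrite /= eqxx.
have ii : i' = i.
  case: (ltngtP i' i) => [lt|lt|eq].
  - by case: (disj _ _ _ lt _ _ E).
  - by case: (disj _ _ _ lt _ _ (esym E)).
  - exact: val_inj.
subst i'; congr inl; congr pair.
apply/rootP; first exact: edge_sym.
apply: connect1; apply/existsP; exists (Tagged (fun R => 'I_(arity R)) i) => /=.
rewrite E eqxx andbT; apply/existsP; exists t; by rewrite Ht eqxx.
Qed.


Definition Dv (F : struct sigma) := {S : sigma & (arity S).-tuple (univ F)}.
Definition Mb := (\max_(R : tau) arity R).+2.
Definition Wt (F : struct sigma) : finType := option (Dv F * 'I_Mb * option (Sig * 'I_Mb)).

Lemma conn_inv (X : finType) (U : Type) (e : rel X) (f : X -> U) :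
  (forall x y, e x y -> f x = f y) -> forall x y, connect e x y -> f x = f y.
Proof.
move=> He x y /connectP [p pth ->]; elim: p x pth => [|z p IH] x //= /andP[exz pth].
by rewrite (He _ _ exz); exact: IH.
Qed.

Section Key.
Variables (F : struct sigma) (phi : univ F -> CU) (Hphi : is_hom F C phi)
  (b0 : univ B) (a0 : univ A).

Definition pc (d : Dv F) : option (Pc (tag d)) :=
  [pick p | good p (map_tuple phi (tagged d))].

Definition ents (S : sigma) (p : Pc S) : seq (univ B) :=
  match p with inl (b, _) => [:: b] | inr (existT R (t, _)) => tval t end.

Definition entsd (d : Dv F) : seq (univ B) :=
  if pc d is Some p then ents p else [::].

Definition wit (b : univ B) (Ri : Sig) : seq (univ B) :=
  if [pick t : (arity (tag Ri)).-tuple (univ B) |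
        Defs.rel B (tag Ri) t && (tnth t (tagged Ri) == b)] is Some t then tval t else [::].

Definition w (x : Wt F) : univ B :=
  match x with
  | None => b0
  | Some (d, j, None) => nth b0 (entsd d) j
  | Some (d, j, Some (Ri, j')) => nth b0 (wit (nth b0 (entsd d) j) Ri) j'
  end.

Definition Sset : {set univ B} := w @: [set: Wt F].

Lemma size_tuple_Mb (R : tau) (t : (arity R).-tuple (univ B)) : size t < Mb.
Proof. by rewrite size_tuple ltnS; apply: leqW; exact: (@leq_bigmax tau (@arity tau) R). Qed.

Lemma size_ents S (p : Pc S) : size (ents p) < Mb.
Proof. by case: p => [[b s]|[R [t s]]] //=; apply: size_tuple_Mb. Qed.

Lemma size_entsd d : size (entsd d) < Mb.
Proof. by rewrite /entsd; case: (pc d) => // p; apply: size_ents. Qed.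

Lemma size_wit b Ri : size (wit b Ri) < Mb.
Proof. by rewrite /wit; case: pickP => // t _; apply: size_tuple_Mb. Qed.

Lemma b0_in : b0 \in Sset.
Proof. by apply/imsetP; exists None; rewrite ?inE. Qed.

Lemma inS_ents d b : b \in entsd d -> b \in Sset.
Proof.
move=> bin; apply/imsetP.
have lt : index b (entsd d) < Mb := leq_trans (introT idP (etrans (index_mem _ _) bin)) (ltnW (size_entsd d)).
exists (Some (d, Ordinal lt, None)); first by rewrite inE.
by rewrite /= nth_index.
Qed.

Lemma inS_wit d b : b \in entsd d -> forall Ri c, c \in wit b Ri -> c \in Sset.
Proof.
move=> bin Ri c cin; apply/imsetP.
have lt : index b (entsd d) < Mb := leq_trans (introT idP (etrans (index_mem _ _) bin)) (ltnW (size_entsd d)).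
have lt' : index c (wit b Ri) < Mb := leq_trans (introT idP (etrans (index_mem _ _) cin)) (ltnW (size_wit b Ri)).
exists (Some (d, Ordinal lt, Some (Ri, Ordinal lt'))); first by rewrite inE.
by rewrite /= nth_index // nth_index.
Qed.

Definition Bp : struct tau :=
  @Struct tau {b : univ B | b \in Sset} (fun R t => Defs.rel B R (map_tuple val t)).

Lemma Bp_nonempty : nonempty Bp.
Proof. by apply/card_gt0P; exists (exist _ b0 b0_in). Qed.

Lemma Bp_card : #|univ Bp| <= #|Wt F|.
Proof.
rewrite /= card_sig; apply: leq_trans (leq_imset_card _ _) _.
by rewrite cardsT.
Qed.

Lemma Bp_B : hom_exists Bp B.
Proof. by exists val; apply/forallP=> R; apply/forallP=> t; apply/implyP. Qed.

Section Sol.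
Variables (h' : univ Bp -> psi_univ pat A) (Hh' : is_hom Bp (Psi pat A) h').

Definition sub (b : univ B) : univ Bp := insubd (exist _ b0 b0_in) b.
Definition H (b : univ B) : {ffun univ P -> univ A} := val (h' (sub b)).

Lemma H_hom b : is_hom P A (H b).
Proof. exact: (valP (h' (sub b))). Qed.

Definition Gt (R : tau) (t : (arity R).-tuple (univ B)) : {ffun univ (Q R) -> univ A} :=
  if [pick g : {ffun univ (Q R) -> univ A} | is_hom (Q R) A g &&
        [forall i, forall x, g (q i x) == H (tnth t i) x]] is Some g then g
  else [ffun _ => a0].

Lemma Gt_spec R (t : (arity R).-tuple (univ B)) : Defs.rel B R t ->
  (forall c, c \in tval t -> c \in Sset) ->
  is_hom (Q R) A (Gt t) /\ forall i x, Gt t (q i x) = H (tnth t i) x.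
Proof.
move=> Ht tS; rewrite /Gt; case: pickP => [g /andP[g1 /forallP g2]|none].
  by split=> // i x; move: (g2 i) => /forallP/(_ x)/eqP.
exfalso.
pose t' : (arity R).-tuple (univ Bp) := map_tuple sub t.
have Et : map_tuple val t' = t.
  apply: val_inj => /=; rewrite -map_comp; apply: map_id_in => c cin /=.
  by rewrite val_insubd tS.
have Ht' : Defs.rel Bp R t' by rewrite /= Et.
move: Hh' => /forallP/(_ R)/forallP/(_ t')/implyP/(_ Ht') /existsP [g /andP[g1 /forallP g2]].
move: (none g); rewrite g1 /=; move/negbT/negP; apply.
apply/forallP=> i; apply/forallP=> x; move: (g2 i) => /forallP/(_ x).
by rewrite tnth_map /t' tnth_map.
Qed.

Lemma H_root b : (forall Ri c, c \in wit b Ri -> c \in Sset) ->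
  forall x, H b (rt b x) = H b x.
Proof.
move=> Hw x; symmetry; apply: (conn_inv (f := H b)); last exact: connect_root.
move=> y y' /existsP [[R i] /andP[hw /eqP E]] /=; simpl in hw, E.
move: (Hw (Tagged (fun R => 'I_(arity R)) i)); rewrite /wit /=.
case: pickP => [t /andP[Ht /eqP Eb]|none] tS.
  have [_ G2] := Gt_spec Ht tS.
  by rewrite -Eb -!G2 E.
by move: hw => /existsP [t]; rewrite none.
Qed.

Definition fval (z : T) : univ A :=
  match z with
  | inl (b, x) => H b x
  | inr (existT R (t, y)) => Gt t y
  end.

Lemma key_hom : hom_exists F A.
Proof.
exists (fun f => fval (val (phi f))).
apply/forallP=> S; apply/forallP=> v; apply/implyP=> Hv.
have HC := Hphi; move: HC => /forallP/(_ S)/forallP/(_ v)/implyP/(_ Hv) HC.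
pose d : Dv F := Tagged (fun S => (arity S).-tuple (univ F)) v.
have [p [Ep Hp]] : exists p, pc d = Some p /\ good p (map_tuple phi v).
  rewrite /pc; case: pickP => [p Hp|none]; first by exists p.
  by move: HC => /existsP [p]; rewrite none.
have ed : entsd d = ents p by rewrite /entsd Ep.
have Hents : forall c, c \in ents p -> c \in Sset by move=> c; rewrite -ed; apply: inS_ents.
have Hwit : forall c, c \in ents p -> forall Ri c', c' \in wit c Ri -> c' \in Sset.
  by move=> c; rewrite -ed; apply: inS_wit.
have EM : map_tuple (fun f => fval (val (phi f))) v =
          map_tuple (fun z => fval (val z)) (map_tuple phi v).
  by apply: val_inj; rewrite /= -map_comp.
rewrite EM; clear EM.
move: Ep Hp ed Hents Hwit; case: p => [[b s]|[R [t s]]] /= Ep.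
  move=> /andP[Hs /eqP ->] ed Hents Hwit.
  have -> : map_tuple (fun z => fval (val z)) (map_tuple (fun x => nzC (inl (b, x))) s)
     = map_tuple (H b) s.
    apply: val_inj; rewrite /= -map_comp; apply: eq_map => x /=.
    by apply: H_root; apply: Hwit; rewrite inE.
  by move: (H_hom b) => /forallP/(_ S)/forallP/(_ s)/implyP/(_ Hs).
move=> /andP[/andP[Ht Hs] /eqP ->] ed Hents Hwit.
have [G1 G2] := Gt_spec Ht Hents.
have -> : map_tuple (fun z => fval (val z))
      (map_tuple (fun y => nzC (inr (existT _ R (t, y)))) s) = map_tuple (Gt t) s.
  apply: val_inj; rewrite /= -map_comp; apply: eq_map => y /=.
  rewrite /preim; case: pickP => [[i x] /= /eqP Ey|_] //=.
  rewrite H_root; first by rewrite -Ey G2.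
  by apply: Hwit; apply: mem_tnth.
by move: G1 => /forallP/(_ S)/forallP/(_ s)/implyP/(_ Hs).
Qed.

End Sol.

Lemma key : exists B' : struct tau,
  [/\ nonempty B', #|univ B'| <= #|Wt F|, hom_exists B' B &
       (hom_exists B' (Psi pat A) -> hom_exists F A)].
Proof.
exists Bp; split; [exact: Bp_nonempty|exact: Bp_card|exact: Bp_B|].
by move=> [h' Hh']; apply: (key_hom Hh').
Qed.

End Key.

End Constr.

Theorem theorem4p5 (sigma tau : vocab) (pat : pattern sigma tau) :
  nonempty (pat_P pat) ->
  (forall R : tau, nonempty (pat_Q pat R)) ->
  (forall (R : tau) (i j : 'I_(arity R)), (i < j)%N ->
     forall x y : univ (pat_P pat), pat_q pat i x <> pat_q pat j y) ->
  forall A : struct sigma, nonempty A ->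
    finite_duality A -> finite_duality (Psi pat A).
Proof.
move=> /card_gt0P [x0 _] _ disj A Ane [Fs [HFs HA]].
have [a0 _] := card_gt0P Ane.
pose K := foldr (fun F m => maxn #|Wt tau F| m) 0 Fs.
exists (Obs (Psi pat A) K); split; first by move=> G; apply: Obs_nonempty.
move=> B /card_gt0P [b0 _]; split.
  move=> HB [G [GIn HG]]; apply: (Obs_nohom GIn); exact: hom_trans HG HB.
move=> Hno; apply: NNPP => HB.
have nC : ~ hom_exists (C pat B) A := fun H => HB (C_to_psi disj H).
have Cne : nonempty (C pat B) by apply/card_gt0P; exists (nzC (inl (b0, x0))).
have [F [FIn [phi Hphi]]] : exists F, List.In F Fs /\ hom_exists F (C pat B).
  by apply: NNPP => H; apply: nC; apply/(HA _ Cne).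
have [B' [ne' card' BB' key']] := key Hphi b0 a0.
have nB' : ~ hom_exists B' (Psi pat A).
  move=> H; apply: ((HA A Ane).1 (hom_id A)); exists F; split => //; exact: key' H.
have [G [GIn GB']] := Obs_complete ne' (leq_trans card' (leq_foldr_max (fun F => #|Wt tau F|) FIn)) nB'.
by apply: Hno; exists G; split => //; apply: hom_trans GB' BB'.
Qed.
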